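(* For $x=(x_n)_{n\ge1}\in\ell^{1,1/2}$ define $$Q(x):=\sum_{n\ge1}n x_n^2+2\sum_{n\ge1}n x_n\sum_{k>n}x_k .$$ Then $Q$ is well defined (the series converge absolutely) on $\ell^{1,1/2}$, it is positive semidefinite, i.e. $Q(x)\ge0$ for all $x\in\ell^{1,1/2}$, it satisfies $|Q(x)|\le 2\|x\|_{\ell^{1,1/2}}^2$ for all $x\in\ell^{1,1/2}$, and $$\inf\{Q(x): x\in\ell^{1,1/2},\ \|x\|_{\ell^{1,1/2}}=1\}=0,$$ so $Q$ is not positive definite (in the sense of being bounded below by a positive multiple of $\|x\|^2_{\ell^{1,1/2}}$).
   Context: $\ell^{1,1/2}$ denotes the space of real sequences $x=(x_n)_{n\ge1}$ with $\|x\|_{\ell^{1,1/2}}:=\sum_{n\ge1}\sqrt n\,|x_n|<\infty$. *)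

(* Defs.v *)
From Stdlib Require Import Reals.
From Coquelicot Require Import Coquelicot.
Open Scope R_scope.

(* Convention: a real sequence (x_n)_{n>=1} is represented by x : nat -> R
   with x k standing for x_{k+1}; the weight of index k is thus (k+1). *)

Definition in_l1half (x : nat -> R) : Prop :=
  ex_series (fun k => sqrt (INR (S k)) * Rabs (x k)).

Definition l1half_norm (x : nat -> R) : R :=
  Series (fun k => sqrt (INR (S k)) * Rabs (x k)).

Definition tail_sum (x : nat -> R) (k : nat) : R :=
  Series (fun j => x (S k + j)%nat).

Definition Qform (x : nat -> R) : R :=
  Series (fun k => INR (S k) * (x k) ^ 2)
  + 2 * Series (fun k => INR (S k) * x k * tail_sum x k).

(* Main.v *)
Require Import Defs.
From Stdlib Require Import Reals Lra Lia Psatz.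
From Coquelicot Require Import Coquelicot.
Open Scope R_scope.

Lemma exs_le (a b : nat -> R) : (forall n, Rabs (a n) <= b n) -> ex_series b -> ex_series a.
Proof. intros H Hb. apply (ex_series_le a b); auto. Qed.

Lemma tail0 (a : nat -> R) : ex_series a -> is_lim_seq (fun k => Series (fun j => a (k+j)%nat)) 0.
Proof.
  intros Ha. apply is_lim_seq_incr_1.
  apply is_lim_seq_ext with (fun k => Series a - sum_n a k).
  { intros k. rewrite (Series_incr_n a (S k)) by (auto; lia). simpl pred.
    rewrite sum_n_Reals. ring. }
  replace 0 with (Series a - Series a) by ring.
  apply is_lim_seq_minus'. apply is_lim_seq_const.
  apply Series_correct in Ha. exact Ha.
Qed.

Lemma tele (a : nat -> R) : is_lim_seq a 0 -> is_series (fun k => a k - a (S k)) (a 0%nat).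
Proof.
  intros Ha.
  assert (E : forall n, sum_n (fun k => a k - a (S k)) n = a 0%nat - a (S n)).
  { induction n. rewrite sum_O. reflexivity. rewrite sum_Sn, IHn. unfold plus; simpl. ring. }
  cut (is_lim_seq (sum_n (fun k => a k - a (S k))) (a 0%nat)). { intro HH; exact HH. }
  apply (is_lim_seq_ext (fun n => a 0%nat - a (S n))). { intros; now rewrite E. }
  replace (Finite (a 0%nat)) with (Finite (a 0%nat - 0)) by (f_equal; ring).
  apply is_lim_seq_minus'. apply is_lim_seq_const.
  apply (is_lim_seq_incr_1 a 0). exact Ha.
Qed.

Lemma finsupp (a : nat -> R) (M : nat) : (forall k, (M < k)%nat -> a k = 0) -> is_series a (sum_n a M).
Proof.
  intros H.
  assert (E : forall n, sum_n a (M + n) = sum_n a M).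
  { induction n. now rewrite Nat.add_0_r. rewrite Nat.add_succ_r, sum_Sn, IHn, H by lia.
    unfold plus; simpl. ring. }
  cut (is_lim_seq (sum_n a) (sum_n a M)). { intro HH; exact HH. }
  apply (is_lim_seq_ext_loc (fun _ => sum_n a M)).
  { exists M. intros n Hn. replace n with (M + (n - M))%nat by lia. now rewrite E. }
  apply is_lim_seq_const.
Qed.

Lemma plusR (x y : R) : plus x y = x + y.
Proof. reflexivity. Qed.

Lemma sum_ge1 (a : nat -> R) (M : nat) : (forall k, (k <= M)%nat -> 1 <= a k) -> INR (S M) <= sum_n a M.
Proof.
  intros H. induction M. rewrite sum_O. simpl. apply H; lia.
  rewrite sum_Sn, plusR, (S_INR (S M)).
  assert (INR (S M) <= sum_n a M) by (apply IHM; intros; apply H; lia).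
  assert (1 <= a (S M)) by (apply H; lia). simpl in *. lra.
Qed.

Lemma sum_le1 (a : nat -> R) (M : nat) : (forall k, a k <= 1) -> sum_n a M <= INR (S M).
Proof.
  intros H. induction M. rewrite sum_O. simpl. apply H.
  rewrite sum_Sn, plusR, (S_INR (S M)).
  specialize (H (S M)). lra.
Qed.

Lemma Series_nonneg' (a : nat -> R) : (forall n, 0 <= a n) -> ex_series a -> 0 <= Series a.
Proof.
  intros H Ha. replace 0 with (0 * Series a) by ring. rewrite <- Series_scal_l.
  apply Series_le; auto. intros; specialize (H n); split; lra.
Qed.

Definition uu (x : nat -> R) k := sqrt (INR (S k)) * Rabs (x k).
Definition UU x k := Series (fun j => uu x (k+j)%nat).
Definition SS (x : nat -> R) k := Series (fun j => x (k+j)%nat).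

Lemma minusR (x y : R) : plus x (opp y) = x - y.
Proof. reflexivity. Qed.

Lemma sq1 k : 1 <= sqrt (INR (S k)).
Proof. rewrite <- sqrt_1. apply sqrt_le_1_alt. rewrite S_INR. pose proof (pos_INR k). lra. Qed.

Lemma sqmono k m : (k <= m)%nat -> sqrt (INR (S k)) <= sqrt (INR (S m)).
Proof. intros. apply sqrt_le_1_alt. apply le_INR. lia. Qed.

Lemma uu_ge0 x k : 0 <= uu x k.
Proof. unfold uu. apply Rmult_le_pos. apply sqrt_pos. apply Rabs_pos. Qed.

Lemma abs_le_u x k : Rabs (x k) <= uu x k.
Proof. unfold uu. pose proof (sq1 k). pose proof (Rabs_pos (x k)). nra. Qed.

Lemma ex_uu_shift x k : in_l1half x -> ex_series (fun j => uu x (k+j)%nat).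
Proof. intros H. apply (ex_series_incr_n (uu x) k). exact H. Qed.

Lemma ex_abs_shift x k : in_l1half x -> ex_series (fun j => Rabs (x (k+j)%nat)).
Proof.
  intros H. apply (exs_le _ (fun j => uu x (k+j)%nat)); [| now apply ex_uu_shift].
  intros n. rewrite Rabs_Rabsolu. apply abs_le_u.
Qed.

Lemma ex_x_shift x k : in_l1half x -> ex_series (fun j => x (k+j)%nat).
Proof. intros H. apply ex_series_Rabs. now apply ex_abs_shift. Qed.

Lemma keyL x k : in_l1half x -> sqrt (INR (S k)) * Rabs (SS x k) <= UU x k.
Proof.
  intros H. unfold SS, UU.
  apply Rle_trans with (sqrt (INR (S k)) * Series (fun j => Rabs (x (k+j)%nat))).
  { apply Rmult_le_compat_l. apply sqrt_pos. apply Series_Rabs. now apply ex_abs_shift. }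
  rewrite <- Series_scal_l. apply Series_le; [| now apply ex_uu_shift].
  intros n. split. apply Rmult_le_pos. apply sqrt_pos. apply Rabs_pos.
  unfold uu. apply Rmult_le_compat_r. apply Rabs_pos. apply sqmono. lia.
Qed.

Lemma UU_ge0 x k : in_l1half x -> 0 <= UU x k.
Proof. intros H. apply Series_nonneg'. intros; apply uu_ge0. now apply ex_uu_shift. Qed.

Lemma UU_lim x : in_l1half x -> is_lim_seq (UU x) 0.
Proof. intros H. apply tail0. exact H. Qed.

Lemma SS_rec x k : in_l1half x -> SS x k = x k + SS x (S k).
Proof.
  intros H. unfold SS. rewrite Series_incr_1 by now apply ex_x_shift.
  rewrite Nat.add_0_r. f_equal. apply Series_ext. intros n. f_equal. lia.
Qed.

Lemma UU_rec x k : in_l1half x -> UU x k = uu x k + UU x (S k).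
Proof.
  intros H. unfold UU. rewrite Series_incr_1 by now apply ex_uu_shift.
  rewrite Nat.add_0_r. f_equal. apply Series_ext. intros n. f_equal. lia.
Qed.

Lemma tail_eq x k : tail_sum x k = SS x (S k).
Proof. reflexivity. Qed.

Lemma UU0 x : UU x 0 = l1half_norm x.
Proof. reflexivity. Qed.

Definition t1 (x : nat -> R) k := INR (S k) * x k ^ 2.
Definition t2 (x : nat -> R) k := INR (S k) * x k * tail_sum x k.

Lemma INRsq k : INR (S k) = sqrt (INR (S k)) * sqrt (INR (S k)).
Proof. rewrite sqrt_sqrt. auto. apply pos_INR. Qed.

Lemma bt1 x k : Rabs (t1 x k) <= uu x k ^ 2.
Proof.
  unfold t1, uu. rewrite Rabs_right.
  2:{ apply Rle_ge, Rmult_le_pos. apply pos_INR. apply pow2_ge_0. }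
  rewrite INRsq at 1. rewrite <- (pow2_abs (x k)). right; ring.
Qed.

Lemma bt2 x k : in_l1half x -> Rabs (t2 x k) <= uu x k * UU x (S k).
Proof.
  intros H. unfold t2, uu. rewrite tail_eq.
  rewrite !Rabs_mult, (Rabs_right (INR (S k))) by (apply Rle_ge, pos_INR).
  rewrite (INRsq k) at 1.
  pose proof (keyL x (S k) H). pose proof (sqmono k (S k) ltac:(lia)).
  assert (sqrt (INR (S k)) * Rabs (SS x (S k)) <= UU x (S k)).
  { eapply Rle_trans; [| exact H0]. apply Rmult_le_compat_r. apply Rabs_pos. exact H1. }
  pose proof (sqrt_pos (INR (S k))). pose proof (Rabs_pos (x k)).
  replace (sqrt (INR (S k)) * sqrt (INR (S k)) * Rabs (x k) * Rabs (SS x (S k))) with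
    (sqrt (INR (S k)) * Rabs (x k) * (sqrt (INR (S k)) * Rabs (SS x (S k)))) by ring.
  apply Rmult_le_compat_l. nra. exact H2.
Qed.

Lemma teleU x : in_l1half x -> is_series (fun k => UU x k ^ 2 - UU x (S k) ^ 2) (l1half_norm x ^ 2).
Proof.
  intros H. rewrite <- UU0. apply (tele (fun k => UU x k ^ 2)).
  replace (Finite 0) with (Finite (0 * 0)) by (f_equal; ring).
  apply (is_lim_seq_ext (fun k => UU x k * UU x k)). { intros; ring. }
  apply is_lim_seq_mult'; now apply UU_lim.
Qed.

Lemma teleU_eq x k : in_l1half x -> UU x k ^ 2 - UU x (S k) ^ 2 = uu x k ^ 2 + 2 * (uu x k * UU x (S k)).
Proof. intros H. rewrite (UU_rec x k H). ring. Qed.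

Lemma ex_t1 x : in_l1half x -> ex_series (fun k => Rabs (t1 x k)).
Proof.
  intros H. apply (exs_le _ (fun k => UU x k ^ 2 - UU x (S k) ^ 2)).
  2:{ eexists. apply teleU, H. }
  intros n. rewrite Rabs_Rabsolu, teleU_eq by auto. pose proof (bt1 x n).
  pose proof (uu_ge0 x n). pose proof (UU_ge0 x (S n) H). nra.
Qed.

Lemma ex_t2 x : in_l1half x -> ex_series (fun k => Rabs (t2 x k)).
Proof.
  intros H. apply (exs_le _ (fun k => UU x k ^ 2 - UU x (S k) ^ 2)).
  2:{ eexists. apply teleU, H. }
  intros n. rewrite Rabs_Rabsolu, teleU_eq by auto. pose proof (bt2 x n H).
  pose proof (uu_ge0 x n). pose proof (UU_ge0 x (S n) H). nra.
Qed.

Lemma Qform_t x : in_l1half x -> Qform x = Series (fun k => t1 x k + 2 * t2 x k).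
Proof.
  intros H. unfold Qform. rewrite Series_plus.
  - rewrite Series_scal_l. reflexivity.
  - apply ex_series_Rabs, ex_t1, H.
  - apply (ex_series_scal_l 2 (t2 x)). apply ex_series_Rabs, ex_t2, H.
Qed.

Definition aa x k := INR (S k) * SS x k ^ 2.

Lemma aa_lim x : in_l1half x -> is_lim_seq (aa x) 0.
Proof.
  intros H. apply (is_lim_seq_le_le (fun _ => 0) _ (fun k => UU x k * UU x k)).
  - intros n. unfold aa. split.
    + apply Rmult_le_pos. apply pos_INR. apply pow2_ge_0.
    + rewrite (INRsq n). rewrite <- (pow2_abs (SS x n)). pose proof (keyL x n H).
      pose proof (sqrt_pos (INR (S n))). pose proof (Rabs_pos (SS x n)).
      replace (sqrt (INR (S n)) * sqrt (INR (S n)) * Rabs (SS x n) ^ 2) with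
        ((sqrt (INR (S n)) * Rabs (SS x n)) * (sqrt (INR (S n)) * Rabs (SS x n))) by ring.
      apply Rmult_le_compat; try nra.
  - apply is_lim_seq_const.
  - replace (Finite 0) with (Finite (0 * 0)) by (f_equal; ring).
    apply is_lim_seq_mult'; now apply UU_lim.
Qed.

Lemma term_eq x k : in_l1half x ->
  t1 x k + 2 * t2 x k = (aa x k - aa x (S k)) + SS x (S k) ^ 2.
Proof.
  intros H. unfold t1, t2, aa. rewrite tail_eq, (SS_rec x k H), (S_INR (S k)). ring.
Qed.

Lemma ex_r x : in_l1half x -> ex_series (fun k => SS x (S k) ^ 2).
Proof.
  intros H.
  assert (E1 : ex_series (fun k => t1 x k + 2 * t2 x k)).
  { apply (ex_series_plus (t1 x) (fun k => 2 * t2 x k)).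
    apply ex_series_Rabs, ex_t1, H.
    apply (ex_series_scal_l 2 (t2 x)). apply ex_series_Rabs, ex_t2, H. }
  assert (E2 : ex_series (fun k => aa x k - aa x (S k))).
  { eexists. apply tele, aa_lim, H. }
  pose proof (ex_series_minus _ _ E1 E2) as E3.
  eapply ex_series_ext; [| exact E3]. intros n. simpl. rewrite minusR, term_eq by auto. ring.
Qed.

Lemma Qformula x : in_l1half x -> Qform x = SS x 0 ^ 2 + Series (fun k => SS x (S k) ^ 2).
Proof.
  intros H. rewrite Qform_t by auto.
  rewrite (Series_ext _ (fun k => (aa x k - aa x (S k)) + SS x (S k) ^ 2)) by (intros; now apply term_eq).
  rewrite Series_plus.
  - rewrite (is_series_unique _ _ (tele _ (aa_lim x H))). unfold aa. simpl. ring.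
  - eexists. apply tele, aa_lim, H.
  - now apply ex_r.
Qed.

Lemma Q_ge0 x : in_l1half x -> 0 <= Qform x.
Proof.
  intros H. rewrite Qformula by auto. pose proof (pow2_ge_0 (SS x 0)).
  assert (0 <= Series (fun k => SS x (S k) ^ 2)).
  { apply Series_nonneg'. intros; apply pow2_ge_0. now apply ex_r. }
  lra.
Qed.

Lemma Q_le x : in_l1half x -> Qform x <= l1half_norm x ^ 2.
Proof.
  intros H. rewrite Qform_t by auto.
  apply Rle_trans with (Series (fun k => Rabs (t1 x k) + 2 * Rabs (t2 x k))).
  - apply Rle_trans with (Rabs (Series (fun k => t1 x k + 2 * t2 x k))). apply Rle_abs.
    rewrite (Series_ext (fun k => Rabs (t1 x k) + 2 * Rabs (t2 x k))
       (fun k => Rabs (Rabs (t1 x k) + 2 * Rabs (t2 x k)))).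
    2:{ intros. rewrite (Rabs_right (Rabs (t1 x n) + _)); auto. pose proof (Rabs_pos (t1 x n)); pose proof (Rabs_pos (t2 x n)). lra. }
    apply Rle_trans with (Series (fun k => Rabs (t1 x k + 2 * t2 x k))).
    + apply Series_Rabs. apply (exs_le _ (fun k => Rabs (t1 x k) + 2 * Rabs (t2 x k))).
      * intros n. rewrite Rabs_Rabsolu. pose proof (Rabs_triang (t1 x n) (2 * t2 x n)).
        rewrite Rabs_mult, (Rabs_right 2) in H0 by lra. lra.
      * apply (ex_series_plus (fun k => Rabs (t1 x k)) (fun k => 2 * Rabs (t2 x k))).
        apply ex_t1, H. apply (ex_series_scal_l 2 (fun k => Rabs (t2 x k))). apply ex_t2, H.
    + apply Series_le.
      * intros n. split. apply Rabs_pos. rewrite (Rabs_right (Rabs (t1 x n) + _)).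
        -- pose proof (Rabs_triang (t1 x n) (2 * t2 x n)).
           rewrite Rabs_mult, (Rabs_right 2) in H0 by lra. lra.
        -- pose proof (Rabs_pos (t1 x n)); pose proof (Rabs_pos (t2 x n)). lra.
      * apply (ex_series_ext (fun k => Rabs (t1 x k) + 2 * Rabs (t2 x k))).
        { intros. rewrite (Rabs_right (Rabs (t1 x n) + _)); auto. pose proof (Rabs_pos (t1 x n)); pose proof (Rabs_pos (t2 x n)). lra. }
        apply (ex_series_plus (fun k => Rabs (t1 x k)) (fun k => 2 * Rabs (t2 x k))).
        apply ex_t1, H. apply (ex_series_scal_l 2 (fun k => Rabs (t2 x k))). apply ex_t2, H.
  - rewrite <- (is_series_unique _ _ (teleU x H)). apply Series_le.
    + intros n. split. pose proof (Rabs_pos (t1 x n)); pose proof (Rabs_pos (t2 x n)). lra.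
      rewrite teleU_eq by auto. pose proof (bt1 x n). pose proof (bt2 x n H). lra.
    + eexists. apply teleU, H.
Qed.

Lemma scalR (a b : R) : scal a b = a * b.
Proof. reflexivity. Qed.

Lemma in_sc c x : in_l1half x -> in_l1half (fun k => c * x k).
Proof.
  intros H. unfold in_l1half.
  apply (ex_series_ext (fun k => scal (Rabs c) (sqrt (INR (S k)) * Rabs (x k)))).
  { intros n. rewrite scalR, Rabs_mult. change (Rabs c * (sqrt (INR (S n)) * Rabs (x n)) = sqrt (INR (S n)) * (Rabs c * Rabs (x n)) :> R). ring. }
  apply (ex_series_scal_l (K:=R_AbsRing) (V:=R_NormedModule) (Rabs c) (fun k => sqrt (INR (S k)) * Rabs (x k))). exact H.
Qed.

Lemma norm_sc c x : l1half_norm (fun k => c * x k) = Rabs c * l1half_norm x.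
Proof.
  unfold l1half_norm. rewrite <- Series_scal_l. apply Series_ext. intros n. rewrite Rabs_mult. ring.
Qed.

Lemma Q_sc c x : Qform (fun k => c * x k) = c ^ 2 * Qform x.
Proof.
  assert (T : forall k, tail_sum (fun k => c * x k) k = c * tail_sum x k).
  { intros k. unfold tail_sum. apply Series_scal_l. }
  unfold Qform. rewrite (Series_ext (fun k => INR (S k) * (c * x k) ^ 2) (fun k => c ^ 2 * (INR (S k) * x k ^ 2))) by (intros; ring).
  rewrite (Series_ext (fun k => INR (S k) * (c * x k) * tail_sum (fun k0 => c * x k0) k)
     (fun k => c ^ 2 * (INR (S k) * x k * tail_sum x k))) by (intros; rewrite T; ring).
  rewrite !Series_scal_l. ring.
Qed.

Definition sM (M : nat) k := if (k <=? M)%nat then (-1) ^ k else 0.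
Definition xM M k := sM M k - sM M (S k).

Lemma sM_zero M k : (M < k)%nat -> sM M k = 0.
Proof. intros. unfold sM. destruct (Nat.leb_spec k M); [lia | reflexivity]. Qed.

Lemma sM_sq M k : sM M k ^ 2 <= 1.
Proof.
  unfold sM. destruct (k <=? M)%nat.
  - rewrite <- pow2_abs, pow_1_abs. lra.
  - lra.
Qed.

Lemma xM_zero M k : (M < k)%nat -> xM M k = 0.
Proof. intros. unfold xM. rewrite !sM_zero by lia. ring. Qed.

Lemma xM_abs M k : (k <= M)%nat -> 1 <= Rabs (xM M k).
Proof.
  intros Hk. unfold xM, sM. destruct (Nat.leb_spec k M); [| lia].
  destruct (Nat.leb_spec (S k) M).
  - replace ((-1) ^ k - (-1) ^ S k) with (2 * (-1) ^ k) by (simpl; ring).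
    rewrite Rabs_mult, pow_1_abs, Rabs_right by lra. lra.
  - rewrite Rminus_0_r, pow_1_abs. lra.
Qed.

Lemma uu_xM_zero M k : (M < k)%nat -> uu (xM M) k = 0.
Proof. intros. unfold uu. rewrite xM_zero by auto. rewrite Rabs_R0. ring. Qed.

Lemma in_xM M : in_l1half (xM M).
Proof. eexists. apply (finsupp (uu (xM M)) M). apply uu_xM_zero. Qed.

Lemma norm_xM M : INR (S M) <= l1half_norm (xM M).
Proof.
  change (l1half_norm (xM M)) with (Series (uu (xM M))).
  rewrite (is_series_unique _ _ (finsupp (uu (xM M)) M (uu_xM_zero M))).
  apply sum_ge1. intros k Hk. eapply Rle_trans. apply xM_abs, Hk. apply abs_le_u.
Qed.

Lemma SS_xM M k : SS (xM M) k = sM M k.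
Proof.
  unfold SS, xM.
  apply is_series_unique.
  apply (is_series_ext (fun j => sM M (k + j)%nat - sM M (k + S j)%nat)).
  { intros n. rewrite Nat.add_succ_r. reflexivity. }
  replace (sM M k) with ((fun j => sM M (k + j)%nat) 0%nat) by (simpl; now rewrite Nat.add_0_r).
  apply (tele (fun j => sM M (k + j)%nat)).
  apply (is_lim_seq_ext_loc (fun _ => 0)). { exists (S M). intros n Hn. rewrite sM_zero by lia. reflexivity. }
  apply is_lim_seq_const.
Qed.

Lemma Q_xM M : Qform (xM M) <= INR (S M) + 1.
Proof.
  rewrite Qformula by apply in_xM.
  rewrite (Series_ext _ (fun k => sM M (S k) ^ 2)) by (intros; now rewrite SS_xM).
  rewrite (is_series_unique _ _ (finsupp (fun k => sM M (S k) ^ 2) M ltac:(intros; cbv beta; rewrite sM_zero by lia; ring))).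
  rewrite SS_xM. pose proof (sM_sq M 0). pose proof (sum_le1 (fun k => sM M (S k) ^ 2) M (fun k => sM_sq M (S k))).
  lra.
Qed.

Lemma example M : exists y, in_l1half y /\ l1half_norm y = 1 /\ Qform y <= 2 / INR (S M).
Proof.
  set (N := l1half_norm (xM M)). set (m := INR (S M)).
  assert (Hm : 1 <= m) by (unfold m; rewrite S_INR; pose proof (pos_INR M); lra).
  assert (HN : m <= N) by apply norm_xM.
  assert (HQ : Qform (xM M) <= 2 * m) by (pose proof (Q_xM M); fold m in H; lra).
  assert (HQ0 : 0 <= Qform (xM M)) by (apply Q_ge0, in_xM).
  exists (fun k => / N * xM M k). split; [| split].
  - apply in_sc, in_xM.
  - rewrite norm_sc. fold N. rewrite Rabs_right. field. lra. apply Rle_ge. left. apply Rinv_0_lt_compat. lra.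
  - rewrite Q_sc. fold N.
    assert (Ha : / N <= / m) by (apply Rinv_le_contravar; lra).
    assert (HaN : / N * N = 1) by (field; lra).
    assert (0 < / N) by (apply Rinv_0_lt_compat; lra).
    apply Rle_trans with ((/ N) ^ 2 * (2 * N)). apply Rmult_le_compat_l. apply pow2_ge_0. lra.
    replace ((/ N) ^ 2 * (2 * N)) with (2 * / N) by (field; lra).
    unfold Rdiv. lra.
Qed.
Theorem proposition2p2 :
  (* well-definedness: all series converge absolutely *)
  (forall x : nat -> R, in_l1half x ->
     (forall k : nat, ex_series (fun j => Rabs (x (S k + j)%nat))) /\
     ex_series (fun k => Rabs (INR (S k) * (x k) ^ 2)) /\
     ex_series (fun k => Rabs (INR (S k) * x k * tail_sum x k))) /\
  (* positive semidefinite *)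
  (forall x : nat -> R, in_l1half x -> 0 <= Qform x) /\
  (* boundedness *)
  (forall x : nat -> R, in_l1half x -> Rabs (Qform x) <= 2 * (l1half_norm x) ^ 2) /\
  (* infimum over the unit sphere is 0 *)
  is_glb_Rbar (fun q : R => exists x : nat -> R,
                  in_l1half x /\ l1half_norm x = 1 /\ q = Qform x) (Finite 0) /\
  (* hence not positive definite *)
  ~ (exists c : R, 0 < c /\
       forall x : nat -> R, in_l1half x -> c * (l1half_norm x) ^ 2 <= Qform x).
Proof.
  assert (G : is_glb_Rbar (fun q : R => exists x : nat -> R,
                  in_l1half x /\ l1half_norm x = 1 /\ q = Qform x) (Finite 0)).
  { split.
    - intros q [x [Hx [_ ->]]]. simpl. now apply Q_ge0.
    - intros b Hb. destruct b as [r| |]; simpl.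
      + destruct (Rle_or_lt r 0) as [Hr|Hr]; auto. exfalso.
        destruct (archimed_cor1 (r / 2)) as [N [HN1 HN2]]. lra.
        destruct (example N) as [y [Hy [Hn Hq]]].
        assert (Rbar_le r (Qform y)) by (apply Hb; exists y; auto). simpl in H.
        assert (0 < INR N) by (apply lt_0_INR; lia).
        assert (INR N < INR (S N)) by (apply lt_INR; lia).
        assert (/ INR (S N) < / INR N) by (apply Rinv_lt_contravar; nra).
        unfold Rdiv in Hq. lra.
      + destruct (example 0) as [y [Hy [Hn Hq]]].
        assert (Rbar_le p_infty (Qform y)) by (apply Hb; exists y; auto). simpl in H. exact H.
      + exact I. }
  split; [| split; [| split; [| split]]].
  - intros x H. split; [| split].
    + intros k. apply (ex_abs_shift x (S k) H).
    + apply (ex_t1 x H).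
    + apply (ex_t2 x H).
  - apply Q_ge0.
  - intros x H. rewrite Rabs_right by (apply Rle_ge, Q_ge0, H).
    pose proof (Q_le x H). pose proof (pow2_ge_0 (l1half_norm x)). lra.
  - exact G.
  - intros [c [Hc Hq]]. destruct G as [_ G].
    assert (Rbar_le c 0). { apply G. intros q [x [Hx [Hn ->]]]. simpl. specialize (Hq x Hx). rewrite Hn in Hq. lra. }
    simpl in H. lra.
Qed.
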